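(* Let $s\ge1$, $d\ge0$ be integers. For every $n\times m$ $(0,1)$-matrix $M$ with ${\rm br}_s(M)\le d$, $$r(M)\cdot c(M)\le \binom{d}{\le s}2^d.$$
   Context: For a $(0,1)$-matrix $M$ of size $n\times m$, $M[i,j]$ denotes its $(i,j)$ entry and $[n]=\{1,\dots,n\}$. The $s$-binary rank ${\rm br}_s(M)$ is the minimal integer $d\ge 0$ such that there exist $d$ sets (rectangles) $I_k\times J_k$ with $I_k\subseteq[n]$, $J_k\subseteq[m]$, $k\in[d]$, with $M[i,j]=1$ for all $(i,j)\in I_k\times J_k$ and all $k$, and such that every $(i,j)$ with $M[i,j]=1$ lies in at least one and at most $s$ of the rectangles. $r(M)$ and $c(M)$ denote the numbers of distinct rows and distinct columns of $M$. $\binom{d}{\le s}=\sum_{i=0}^{s}\binom{d}{i}$. *)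

(* Defs.v *)
From mathcomp Require Import all_boot all_order all_algebra.
Set Implicit Arguments. Unset Strict Implicit. Unset Printing Implicit Defensive.

(* A (0,1)-matrix is an n x m matrix with boolean entries (true = 1).
   A rectangle is a pair (I, J) of a row set and a column set. *)
Definition rect n m := ({set 'I_n} * {set 'I_m})%type.

Definition is_s_cover (s : nat) n m (M : 'M[bool]_(n, m)) d
    (R : {ffun 'I_d -> rect n m}) : bool :=
  [forall k, forall i, forall j, (i \in (R k).1) && (j \in (R k).2) ==> M i j]
  && [forall i, forall j, M i j ==>
        (0 < #|[set k | (i \in (R k).1) && (j \in (R k).2)]| <= s)].

Definition has_s_cover (s : nat) n m (M : 'M[bool]_(n, m)) (d : nat) : bool :=
  [exists R : {ffun 'I_d -> rect n m}, is_s_cover s M R].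

Definition single_rect n m (M : 'M[bool]_(n, m)) (ij : 'I_n * 'I_m) : rect n m :=
  if M ij.1 ij.2 then ([set ij.1], [set ij.2]) else (set0, set0).

Lemma s_cover_exists (s : nat) n m (M : 'M[bool]_(n, m)) :
  0 < s -> exists d, has_s_cover s M d.
Proof.
move=> s0; exists #|{: 'I_n * 'I_m}|.
apply/existsP.
exists [ffun k => single_rect M (enum_val k)].
apply/andP; split.
- apply/forallP=> k; apply/forallP=> i; apply/forallP=> j; apply/implyP.
  rewrite ffunE /single_rect; case: ifP => H /=; last by rewrite !inE.
  by rewrite !in_set1 => /andP [/eqP -> /eqP ->].
- apply/forallP=> i; apply/forallP=> j; apply/implyP=> Mij.
  set S := [set k | _].
  have -> : S = [set enum_rank (i, j)].
    apply/setP=> k; rewrite !inE ffunE /single_rect.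
    case: ifP => H /=.
      rewrite !in_set1 -xpair_eqE.
      have -> : ((enum_val k).1, (enum_val k).2) = enum_val k by case: (enum_val k).
      apply/eqP/eqP=> [->|->]; [by rewrite enum_valK | by rewrite enum_rankK].
    rewrite !inE /=; apply/esym/negbTE; apply/eqP=> Ek.
    by move: H; rewrite Ek enum_rankK /= Mij.
  by rewrite cards1.
Qed.

(* s-binary rank br_s(M): the least d admitting an s-cover by d rectangles
   (defined for s >= 1; for s = 0 it is set to 0, never used). *)
Definition br (s : nat) n m (M : 'M[bool]_(n, m)) : nat :=
  match (0 < s) as b return (0 < s) = b -> nat with
  | true => fun e => ex_minn (s_cover_exists M e)
  | false => fun _ => 0
  end erefl.

Definition nrows n m (M : 'M[bool]_(n, m)) : nat := #|[set row i M | i : 'I_n]|.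
Definition ncols n m (M : 'M[bool]_(n, m)) : nat := #|[set col j M | j : 'I_m]|.

Definition binom_le (d s : nat) : nat := \sum_(0 <= i < s.+1) 'C(d, i).

(* Main.v *)
Require Import Defs.
From mathcomp Require Import all_boot all_order all_algebra.
From mathcomp Require Import zify.

Fixpoint inter (x y : seq bool) : nat :=
  match x, y with
  | b :: x', c :: y' => (b && c) + inter x' y'
  | _, _ => 0
  end.

Lemma inter_behead x y : inter (behead x) (behead y) <= inter x y.
Proof. case: x => [|a x] //; case: y => [|b y] //=; first by case: x. lia. Qed.

Lemma inter_map (T : Type) (f g : T -> bool) (r : seq T) :
  inter (map f r) (map g r) = count (fun k => f k && g k) r.
Proof. by elim: r => //= a r ->. Qed.

Lemma arith (a0 a1 b0 b1 u v : nat) : a0 <= u -> a1 <= u -> b0 <= v -> b1 <= v ->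
  (a0+a1)*(b0+b1) <= 2*(u*v) + 2*(a1*b1).
Proof. move=> *. case: (leqP b0 b1) => ?; nia. Qed.

Lemma binom_le_ge1 d s : 1 <= binom_le d s.
Proof. by rewrite /binom_le big_ltn // bin0; lia. Qed.

Lemma binom_leS d s : binom_le d.+1 s.+1 = binom_le d s.+1 + binom_le d s.
Proof.
rewrite /binom_le big_nat_recl // [X in _ = X + _]big_nat_recl // !bin0.
under eq_bigr => i _ do rewrite binS.
rewrite big_split /=; lia.
Qed.

Lemma binom_le0 d : binom_le d 0 = 1.
Proof. by rewrite /binom_le big_nat1 bin0. Qed.

Lemma binom_le_mono d d' s : d' <= d -> binom_le d' s <= binom_le d s.
Proof. move=> h; apply: leq_sum => i _; exact: leq_bin2l. Qed.

Lemma split_size (X : seq (seq bool)) :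
  size X = size [seq behead x | x <- X & ~~ head false x] +
           size [seq behead x | x <- X & head false x].
Proof. by rewrite !size_map !size_filter addnC count_predC. Qed.

Lemma key d : forall s (X Y : seq (seq bool)), uniq X -> uniq Y ->
  {in X, forall x, size x = d} -> {in Y, forall y, size y = d} ->
  {in X & Y, forall x y, inter x y <= s} ->
  size X * size Y <= binom_le d s * 2 ^ d.
Proof.
elim: d => [|d IH] s X Y uX uY sX sY hXY.
  have h1 : forall Z : seq (seq bool), uniq Z -> {in Z, forall x, size x = 0} -> size Z <= 1.
    move=> Z uZ sZ; have -> : 1 = size [:: [::] : seq bool] by [].
    apply: uniq_leq_size => // z /sZ /size0nil ->; by rewrite inE.
  have := binom_le_ge1 0 s; have := h1 _ uX sX; have := h1 _ uY sY; rewrite expn0; nia.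
set X0 := [seq behead x | x <- X & ~~ head false x].
set X1 := [seq behead x | x <- X & head false x].
set Y0 := [seq behead x | x <- Y & ~~ head false x].
set Y1 := [seq behead x | x <- Y & head false x].
have uniq_split : forall (Z : seq (seq bool)) (b : bool), uniq Z ->
    {in Z, forall x, size x = d.+1} ->
    uniq [seq behead x | x <- Z & head false x == b].
  move=> Z b uZ sZ; rewrite map_inj_in_uniq ?filter_uniq //.
  move=> x y; rewrite !mem_filter => /andP [/eqP hx /sZ]; case: x hx => // a x /= -> _.
  by move=> /andP [/eqP hy /sZ]; case: y hy => // c y /= -> _ ->.
have uX1 : uniq X1.
  have := uniq_split X true uX sX; by rewrite (eq_filter (a2 := fun x => head false x)) // => x; case: (head false x).
have uX0 : uniq X0.
  have := uniq_split X false uX sX; by rewrite (eq_filter (a2 := fun x => ~~ head false x)) // => x; case: (head false x).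
have uY1 : uniq Y1.
  have := uniq_split Y true uY sY; by rewrite (eq_filter (a2 := fun x => head false x)) // => x; case: (head false x).
have uY0 : uniq Y0.
  have := uniq_split Y false uY sY; by rewrite (eq_filter (a2 := fun x => ~~ head false x)) // => x; case: (head false x).
have memU : forall (Z : seq (seq bool)) (p : pred (seq bool)) z,
    z \in [seq behead x | x <- Z & p x] -> exists2 x, x \in Z & z = behead x.
  move=> Z p z /mapP [x]; rewrite mem_filter => /andP [_ hx] ->; by exists x.
set U := undup (X0 ++ X1).
set V := undup (Y0 ++ Y1).
have memU' : forall z, z \in U -> exists2 x, x \in X & z = behead x.
  move=> z; rewrite mem_undup mem_cat => /orP [] /memU; apply.
have memV' : forall z, z \in V -> exists2 x, x \in Y & z = behead x.
  move=> z; rewrite mem_undup mem_cat => /orP [] /memU; apply.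
have hUV : size U * size V <= binom_le d s * 2 ^ d.
  apply: IH; rewrite ?undup_uniq //.
  - by move=> z /memU' [x /sX hx ->]; rewrite size_behead hx.
  - by move=> z /memV' [x /sY hx ->]; rewrite size_behead hx.
  - move=> z w /memU' [x hx ->] /memV' [y hy ->].
    exact: leq_trans (inter_behead _ _) (hXY _ _ hx hy).
have sub : forall A B : seq (seq bool), uniq A -> {subset A <= B} -> size A <= size (undup B).
  move=> A B uA sAB; apply: uniq_leq_size => // z /sAB; by rewrite mem_undup.
have a0U : size X0 <= size U by apply: sub => // z hz; rewrite mem_cat hz.
have a1U : size X1 <= size U by apply: sub => // z hz; rewrite mem_cat hz orbT.
have b0V : size Y0 <= size V by apply: sub => // z hz; rewrite mem_cat hz.
have b1V : size Y1 <= size V by apply: sub => // z hz; rewrite mem_cat hz orbT.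
have h11 : forall z w, z \in X1 -> w \in Y1 -> (inter z w).+1 <= s.
  move=> z w /mapP [x]; rewrite mem_filter => /andP [hx xX] -> /mapP [y].
  rewrite mem_filter => /andP [hy yY] ->.
  have := hXY _ _ xX yY; case: x hx {xX} => // a x /= ->; case: y hy {yY} => // c y /= ->.
  by [].
rewrite (split_size X) (split_size Y) -/X0 -/X1 -/Y0 -/Y1 expnS.
have ar := arith _ _ _ _ _ _ a0U a1U b0V b1V.
case: s hXY hUV h11 => [|s] hXY hUV h11.
  have e : size X1 * size Y1 = 0.
    case E1: X1 => [|z X1'] //; case E2: Y1 => [|w Y1']; first by rewrite muln0.
    by have := h11 z w; rewrite E1 E2 !mem_head => /(_ isT isT).
  rewrite binom_le0 in hUV; rewrite binom_le0 e in ar *; nia.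
have h1 : size X1 * size Y1 <= binom_le d s * 2 ^ d.
  apply: IH => //.
  - by move=> z /memU [x /sX hx ->]; rewrite size_behead hx.
  - by move=> z /memU [x /sY hx ->]; rewrite size_behead hx.
rewrite binom_leS; nia.
Qed.

Lemma count_card d (P : pred 'I_d) : count P (enum 'I_d) = #|[set k | P k]|.
Proof.
rewrite cardsE cardE /enum_mem -size_filter. congr size.
rewrite -filter_predI; apply: eq_filter => x /=; by rewrite !inE andbT.
Qed.

Lemma br_cover s n m (M : 'M[bool]_(n, m)) : 1 <= s -> has_s_cover s M (br s M).
Proof. case: s => // s _; rewrite /br /=; by case: ex_minnP. Qed.

Theorem lemma4 (s d n m : nat) (M : 'M[bool]_(n, m)) :
  1 <= s -> br s M <= d ->
  nrows M * ncols M <= binom_le d s * 2 ^ d.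
Proof.
move=> s1 hd.
have /existsP [R /andP [/forallP hR1 /forallP hR2]] := (@br_cover s n m M s1).
set d' := br s M in R hR1 hR2 hd.
pose a (i : 'I_n) := [seq i \in (R k).1 | k <- enum 'I_d'].
pose b (j : 'I_m) := [seq j \in (R k).2 | k <- enum 'I_d'].
have hab : forall i j, inter (a i) (b j) = #|[set k | (i \in (R k).1) && (j \in (R k).2)]|.
  move=> i j; rewrite inter_map; exact: count_card.
have hM : forall i j, M i j = (0 < inter (a i) (b j)).
  move=> i j; rewrite hab; case Mij: (M i j).
    by have /forallP /(_ j) := hR2 i; rewrite Mij => /andP [].
  apply/esym/negbTE; rewrite -leqNgt leqn0 cards_eq0; apply/eqP/setP => k.
  rewrite !inE; apply/negbTE/negP => hk.
  by have /forallP /(_ i) /forallP /(_ j) := hR1 k; rewrite hk Mij.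
have hs : forall i j, inter (a i) (b j) <= s.
  move=> i j; case Mij: (M i j).
    by have /forallP /(_ j) := hR2 i; rewrite Mij hab => /andP [].
  by move: Mij; rewrite hM; case: (inter _ _).
pose X := undup (map a (enum 'I_n)).
pose Y := undup (map b (enum 'I_m)).
pose gr (x : seq bool) : 'rV[bool]_m := (\row_(j < m) (0 < inter x (b j))%N)%R.
pose gc (y : seq bool) : 'cV[bool]_n := (\col_(i < n) (0 < inter (a i) y)%N)%R.
have hr : nrows M <= size X.
  rewrite /nrows; apply: leq_trans (_ : #|[seq gr x | x <- X]| <= _); last first.
    by apply: leq_trans (card_size _) _; rewrite size_map.
  apply: subset_leq_card; apply/subsetP => r /imsetP [i _ ->].
  apply/mapP; exists (a i); first by rewrite mem_undup map_f ?mem_enum.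
  by apply/rowP => j; rewrite !mxE hM.
have hc : ncols M <= size Y.
  rewrite /ncols; apply: leq_trans (_ : #|[seq gc x | x <- Y]| <= _); last first.
    by apply: leq_trans (card_size _) _; rewrite size_map.
  apply: subset_leq_card; apply/subsetP => r /imsetP [j _ ->].
  apply/mapP; exists (b j); first by rewrite mem_undup map_f ?mem_enum.
  by apply/colP => i; rewrite !mxE hM.
have hk : size X * size Y <= binom_le d' s * 2 ^ d'.
  apply: key; rewrite ?undup_uniq //.
  - by move=> x; rewrite mem_undup => /mapP [i _ ->]; rewrite size_map size_enum_ord.
  - by move=> x; rewrite mem_undup => /mapP [i _ ->]; rewrite size_map size_enum_ord.
  - move=> x y; rewrite !mem_undup => /mapP [i _ ->] /mapP [j _ ->]; exact: hs.
apply: leq_trans (leq_mul hr hc) _; apply: leq_trans hk _.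
by apply: leq_mul; [apply: binom_le_mono | rewrite leq_exp2l].
Qed.
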